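(* Let $\Omega\subset\mathbb{R}^d$ be compact and let $\alpha^*:\Omega\to\mathbb{R}^{N-1}$ be the continuous function $\alpha^*(\omega)=A^{-1}F(\omega)$ described in the context, with $\sup_{\omega\in\Omega}|\alpha^*(\omega)|<C_\alpha$. Then \[ \lim_{n\to\infty}\ \inf_{\tilde g\in\mathcal{N}_n}\ \|\tilde g-\alpha^*\|_{C(\Omega)}=0 . \]
   Context: Let $I=(-1,1)$, $\nu\ge 0$, and let $f(x;\omega)$ be an external force with $f\in C(\Omega;L^1(I))$. Let $L_k$ denote the $k$-th Legendre polynomial and let $\phi_k=L_k+a_kL_{k+1}+b_kL_{k+2}$, $k=1,\dots,N-1$, be basis functions (the constants $a_k,b_k$ chosen so that $\phi_k$ satisfies the boundary condition). Define $S,M\in\mathbb{R}^{(N-1)\times(N-1)}$ and $F(\omega)\in\mathbb{R}^{N-1}$ by $S_{ij}=\int_I\phi_i'\phi_j'\,dx$, $M_{ij}=\int_I\phi_i\phi_j\,dx$, $F_j(\omega)=\int_I f(x;\omega)\phi_j(x)\,dx$, and let $A=S+\nu M$, assumed symmetric and non-singular; $\alpha^*(\omega)=A^{-1}F(\omega)$. Neural networks: an $L$-layer feed-forward network $\mathbb{R}^{n_0}\to\mathbb{R}^{n_L}$ is defined by $f^1(x)=W^1x+b^1$, $f^\ell(x)=W^\ell\sigma(f^{\ell-1}(x))+b^\ell$ ($2\le\ell\le L$), with $\sigma$ applied componentwise. Let $\{\vec n_n\}$ be a sequence of architectures such that every network of architecture $\vec n_n$ is realized by some network of architecture $\vec n_{n+1}$,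 and let $\mathcal N_n^*$ be the set of realizations of networks of architecture $\vec n_n$ (maps $\mathbb{R}^d\to\mathbb{R}^{N-1}$), so $\mathcal N_n^*\subset\mathcal N_{n+1}^*$. Standing assumption (universal approximation): for every compact $K\subset\mathbb{R}^d$ and every $g\in C(K,\mathbb{R}^{N-1})$, $\lim_{n\to\infty}\inf_{\hat g\in\mathcal N_n^*}\|\hat g-g\|_{C(K)}=0$. Let $\sigma^*:\mathbb{R}\to\mathbb{R}$ be a bounded activation function with continuous inverse (e.g. sigmoid or $\tanh$), $\sigma_-=\inf\sigma^*$, $\sigma_+=\sup\sigma^*$, and let $h:[\sigma_-,\sigma_+]\to[-C_\alpha,C_\alpha]$ be the affine map with $h(\sigma_-)=-C_\alpha$, $h(\sigma_+)=C_\alpha$. Define $\mathcal N_n=\{h\circ\sigma^*(g):g\in\mathcal N_n^*\}$ (componentwise composition). *)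

(* Defs.v *)
From HB Require Import structures.
From mathcomp Require Import all_boot all_order all_algebra.
From mathcomp Require Import all_classical all_reals all_analysis.
Set Implicit Arguments. Unset Strict Implicit. Unset Printing Implicit Defensive.
Import Order.TTheory GRing.Theory Num.Theory.
Import numFieldNormedType.Exports.
Local Open Scope classical_set_scope.
Local Open Scope ring_scope.

Section Defs.
Variable R : realType.

(* the interval I = (-1,1) (closed version: same Lebesgue integrals) *)
Definition Iset : set R := [set x : R | -1 < x < 1].

Definition intI (g : R -> R) : R :=
  fine (\int[@lebesgue_measure R]_(x in Iset) (g x)%:E)%E.

Definition legendre (n : nat) : {poly R} :=
  ((2 ^ n * n`!)%:R)^-1 *: (('X^2 - 1) ^+ n)^`(n).

Definition phi (a b : nat -> R) (k : nat) : {poly R} :=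
  legendre k + a k *: legendre k.+1 + b k *: legendre k.+2.

(* index i : 'I_(N-1) stands for k = i+1 *)
Definition stiff (a b : nat -> R) (N : nat) : 'M[R]_(N.-1) :=
  \matrix_(i, j) intI (fun x => ((phi a b i.+1)^`()).[x] * ((phi a b j.+1)^`()).[x]).

Definition mass (a b : nat -> R) (N : nat) : 'M[R]_(N.-1) :=
  \matrix_(i, j) intI (fun x => (phi a b i.+1).[x] * (phi a b j.+1).[x]).

Definition Amat (a b : nat -> R) (nu : R) (N : nat) : 'M[R]_(N.-1) :=
  stiff a b N + nu *: mass a b N.

Definition Fvec (a b : nat -> R) (N d : nat) (f : R -> 'cV[R]_d -> R)
  (w : 'cV[R]_d) : 'cV[R]_(N.-1) :=
  \col_j intI (fun x => f x w * (phi a b j.+1).[x]).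

Definition alpha_star (a b : nat -> R) (nu : R) (N d : nat)
  (f : R -> 'cV[R]_d -> R) (w : 'cV[R]_d) : 'cV[R]_(N.-1) :=
  invmx (Amat a b nu N) *m Fvec a b N f w.

Definition C_L1 (d : nat) (Omega : set 'cV[R]_d) (f : R -> 'cV[R]_d -> R) : Prop :=
  (forall w, Omega w -> (@lebesgue_measure R).-integrable Iset (fun x => (f x w)%:E))
  /\ (forall w, Omega w -> forall e : R, 0 < e -> exists2 delta : R, 0 < delta &
        forall w', Omega w' -> `|w' - w| < delta ->
          (\int[@lebesgue_measure R]_(x in Iset) (`|f x w' - f x w|)%:E < e%:E)%E).

(* sup norm on K of a map into R^m (max norm on R^m);
   convention: the norm over an empty K is 0 *)
Definition supnorm (d m : nat) (K : set 'cV[R]_d) (g : 'cV[R]_d -> 'cV[R]_m) : \bar R :=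
  ereal_sup ([set 0%E] `|` [set (`|g x|)%:E | x in K]).

(* realizations of feed-forward networks R^m -> R^p with hidden widths hs:
   A_L o sigma o A_{L-1} o ... o sigma o A_1, A_l affine *)
Fixpoint nn_set (sigma : R -> R) (m : nat) (hs : seq nat) (p : nat)
  : set ('cV[R]_m -> 'cV[R]_p) :=
  match hs with
  | [::] => [set g | exists (W : 'M[R]_(p, m)) (c : 'cV[R]_p),
                       g = fun x => W *m x + c]
  | h :: hs' => [set g | exists (W : 'M[R]_(h, m)) (c : 'cV[R]_h) g',
                   @nn_set sigma h hs' p g' /\
                   g = fun x => g' (map_mx sigma (W *m x + c))]
  end.

Definition hmap (sigs : R -> R) (C : R) (s : R) : R :=
  - C + 2 * C * (s - inf (range sigs)) / (sup (range sigs) - inf (range sigs)).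

Definition nn_bounded (sigma sigs : R -> R) (C : R) (d : nat) (hs : seq nat) (p : nat)
  : set ('cV[R]_d -> 'cV[R]_p) :=
  [set (fun x => map_mx (hmap sigs C \o sigs) (g x)) | g in @nn_set sigma d hs p].

End Defs.

Arguments nn_set {R} sigma m hs p.
Arguments nn_bounded {R} sigma sigs C d hs p.

(* Main.v *)
Require Import Defs.
From HB Require Import structures.
From mathcomp Require Import all_boot all_order all_algebra.
From mathcomp Require Import all_classical all_reals all_analysis.
From mathcomp Require Import measurable_realfun.
From mathcomp Require Import ring lra.
Import Order.TTheory GRing.Theory Num.Theory.
Import numFieldNormedType.Exports.
Local Open Scope classical_set_scope.
Local Open Scope ring_scope.
Set Implicit Arguments. Unset Strict Implicit. Unset Printing Implicit Defensive.
Lemma mxnorm_le (R : realType) (m n : nat) (v : 'M[R]_(m,n)) (e : R) :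
  `|v| <= e <-> 0 <= e /\ forall i j, `|v i j| <= e.
Proof.
rewrite [X in X <= _]/Num.norm /= mx_normrE; split.
  by move=> /bigmax_leP [h1 h2]; split => // i j; exact: (h2 (i,j)).
by move=> [h1 h2]; apply/bigmax_leP; split => // -[i j] _; exact: h2.
Qed.
Lemma mxnorm_lt (R : realType) (m n : nat) (v : 'M[R]_(m,n)) (e : R) :
  `|v| < e <-> 0 < e /\ forall i j, `|v i j| < e.
Proof.
rewrite [X in X < _]/Num.norm /= mx_normrE; split.
  by move=> /bigmax_ltP [h1 h2]; split => // i j; exact: (h2 (i,j)).
by move=> [h1 h2]; apply/bigmax_ltP; split => // -[i j] _; exact: h2.
Qed.
Lemma mxnorm_coef (R : realType) (m n : nat) (v : 'M[R]_(m,n)) i j : `|v i j| <= `|v|.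
Proof. by have /mxnorm_le[_ ->] : `|v| <= `|v| by []. Qed.

Lemma mulmx_bound (R : realType) (m n p : nat) (B : 'M[R]_(m,n)) :
  exists2 K : R, 0 <= K & forall v : 'M[R]_(n,p), `|B *m v| <= K * `|v|.
Proof.
exists (\sum_i \sum_j `|B i j|).
  by apply: sumr_ge0 => i _; apply: sumr_ge0.
move=> v; apply/mxnorm_le; split.
  by apply: mulr_ge0 => //; apply: sumr_ge0 => i _; apply: sumr_ge0.
move=> i k; rewrite mxE; apply: (le_trans (ler_norm_sum _ _ _)).
apply: (@le_trans _ _ ((\sum_j `|B i j|) * `|v|)).
  rewrite mulr_suml; apply: ler_sum => j _; rewrite normrM.
  by apply: ler_wpM2l => //; exact: mxnorm_coef.
apply: ler_wpM2r => //.
rewrite (bigD1 i) //= lerDl; apply: sumr_ge0 => ? _; apply: sumr_ge0 => ? _; exact: normr_ge0.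
Qed.

Definition PB (R : realType) (p : {poly R}) : R := \sum_(i < size p) `|p`_i|.
Lemma PB_ge0 (R : realType) (p : {poly R}) : 0 <= PB p.
Proof. by apply: sumr_ge0 => i _. Qed.
Lemma PB_bound (R : realType) (p : {poly R}) (x : R) : -1 < x < 1 -> `|p.[x]| <= PB p.
Proof.
move=> /andP[x1 x2].
rewrite horner_coef; apply: (le_trans (ler_norm_sum _ _ _)).
apply: ler_sum => i _; rewrite normrM normrX.
have hx : `|x| <= 1 by rewrite ler_norml !ltW.
rewrite -[leRHS]mulr1; apply: ler_wpM2l => //.
exact: exprn_ile1.
Qed.
Lemma Iset_meas (R : realType) : measurable (@Iset R).
Proof.
rewrite (_ : @Iset R = (`]-1, 1[%classic : set R)); first exact: measurable_itv.
by apply/seteqP; split => x; rewrite /Iset /= in_itv.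
Qed.

Local Open Scope ereal_scope.
Lemma intI_diff (R : realType) (g1 g2 : R -> R) (p : {poly R}) (M e : R) :
  (@lebesgue_measure R).-integrable (@Iset R) (fun x => (g1 x)%:E) ->
  (@lebesgue_measure R).-integrable (@Iset R) (fun x => (g2 x)%:E) ->
  (0 <= M)%R -> (forall x, @Iset R x -> `|p.[x]| <= M)%R ->
  \int[@lebesgue_measure R]_(x in @Iset R) (`|g1 x - g2 x|)%:E < e%:E ->
  (`|intI (fun x => g1 x * p.[x]) - intI (fun x => g2 x * p.[x])| <= M * e)%R.
Proof.
move=> i1 i2 M0 pM ie.
have mI : measurable (@Iset R : set (measurableTypeR R)) by exact (@Iset_meas R).
have mp0 : measurable_fun (@Iset R) (horner p).
  by apply/measurable_funTS; apply: continuous_measurable_fun; exact/continuous_horner.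
have mp : measurable_fun (@Iset R : set (measurableTypeR R)) (horner p) by exact mp0.
have bp : [bounded (horner p) x | x in @Iset R].
  exists M; split; first exact: num_real.
  move=> y My x Ix; apply: (le_trans (pM x Ix)); exact: ltW.
have mg1 : measurable_fun (@Iset R : set (measurableTypeR R)) g1 by apply/measurable_EFinP; exact: (measurable_int _ i1).
have mg2 : measurable_fun (@Iset R : set (measurableTypeR R)) g2 by apply/measurable_EFinP; exact: (measurable_int _ i2).
have ip1 : (@lebesgue_measure R).-integrable (@Iset R) (fun x => (g1 x * p.[x])%:E).
  apply: (eq_integrable mI); last exact: (integrableMl mI i1 mp bp).
  by move=> x _ /=; rewrite EFinM.
have ip2 : (@lebesgue_measure R).-integrable (@Iset R) (fun x => (g2 x * p.[x])%:E).
  apply: (eq_integrable mI); last exact: (integrableMl mI i2 mp bp).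
  by move=> x _ /=; rewrite EFinM.
rewrite /intI -fineB; [|exact: integrable_fin_num|exact: integrable_fin_num].
set X := (X in fine X).
have XE : X = \int[@lebesgue_measure R]_(x in @Iset R) ((g1 x * p.[x])%:E - (g2 x * p.[x])%:E).
  exact: (esym (integralB_EFin mI ip1 ip2)).
have Xfin : X \is a fin_num.
  by rewrite /X fin_numB !integrable_fin_num.
have -> : (`|fine X|)%R = fine `|X| by rewrite fine_abse.
rewrite -lee_fin fineK; last by rewrite abse_fin_num.
rewrite XE.
have mdiff : measurable_fun (@Iset R : set (measurableTypeR R)) (fun x => (g1 x * p.[x])%:E - (g2 x * p.[x])%:E).
  apply/measurable_EFinP; apply: measurable_funB; exact: measurable_funM.
apply: (le_trans (le_abse_integral _ mI mdiff)).
have mab : measurable_fun (@Iset R : set (measurableTypeR R)) (fun x => `|g1 x - g2 x|%:E).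
  apply/measurable_EFinP; apply: measurableT_comp => //; exact: measurable_funB.
apply: (@le_trans _ _ (\int[@lebesgue_measure R]_(x in @Iset R) (M%:E * `|g1 x - g2 x|%:E))).
  apply: ge0_le_integral => //.
  - exact: measurableT_comp.
  - apply/measurable_EFinP; apply: measurable_funM.
      exact: measurable_cst.
    apply: measurableT_comp => //; exact: measurable_funB.
  move=> x Ix /=; rewrite -EFinM lee_fin -mulrBl normrM mulrC.
  by apply: ler_wpM2r => //; exact: pM.
rewrite ge0_integralZl //.
rewrite EFinM; apply: lee_wpmul2l; first by rewrite lee_fin.
exact: ltW.
Qed.

Local Close Scope ereal_scope.

Lemma Fvec_cont (R : realType) (a b : nat -> R) (N d : nat) (f : R -> 'cV[R]_d -> R)
  (Omega : set 'cV[R]_d) : C_L1 Omega f ->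
  forall w, Omega w -> forall e : R, 0 < e -> exists2 del : R, 0 < del &
    forall w', Omega w' -> `|w' - w| < del -> `|Fvec a b N f w' - Fvec a b N f w| < e.
Proof.
move=> [fint fcont] w Ow e e0.
pose Mall : R := 1 + \sum_(j < N.-1) PB (phi a b j.+1).
have M0 : 0 < Mall.
  by rewrite /Mall ltr_wpDr // sumr_ge0 // => j _; exact: PB_ge0.
have Mj : forall j : 'I_N.-1, forall x, @Iset R x -> `|(phi a b j.+1).[x]| <= Mall.
  move=> j x Ix; apply: (le_trans (PB_bound _ Ix)).
  rewrite /Mall (bigD1 j) //= addrCA lerDl.
  apply: addr_ge0 => //; apply: sumr_ge0 => ? _; exact: PB_ge0.
have e'0 : 0 < e / (2 * Mall) by apply: divr_gt0 => //; apply: mulr_gt0.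
have [del del0 H] := fcont w Ow _ e'0.
exists del => // w' Ow' ww'.
apply/mxnorm_lt; split => // j k.
rewrite !mxE.
have := @intI_diff R (fun x => f x w') (fun x => f x w) (phi a b j.+1) Mall (e / (2 * Mall)) (fint _ Ow') (fint _ Ow) (ltW M0) (Mj j) (H _ Ow' ww').
move=> /le_lt_trans; apply.
rewrite mulrCA gtr_pMr // ltr_pdivrMr ?mulr_gt0 // mul1r.
by rewrite ltr_pMl // ?ltr1n.
Qed.

Lemma alpha_cont (R : realType) (a b : nat -> R) (nu : R) (N d : nat) (f : R -> 'cV[R]_d -> R)
  (Omega : set 'cV[R]_d) : C_L1 Omega f ->
  forall w, Omega w -> forall e : R, 0 < e -> exists2 del : R, 0 < del &
    forall w', Omega w' -> `|w' - w| < del ->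
      `|alpha_star a b nu N f w' - alpha_star a b nu N f w| < e.
Proof.
move=> hf w Ow e e0.
have [K K0 HK] := @mulmx_bound R _ _ 1 (invmx (Amat a b nu N)).
have e'0 : 0 < e / (K + 1) by apply: divr_gt0 => //; rewrite ltr_wpDl.
have [del del0 H] := Fvec_cont a b N hf Ow e'0.
exists del => // w' Ow' ww'.
rewrite /alpha_star -mulmxBr.
apply: (le_lt_trans (HK _)).
apply: (@le_lt_trans _ _ (K * (e / (K + 1)))).
  by apply: ler_wpM2l => //; apply: ltW; exact: H.
rewrite mulrA ltr_pdivrMr ?ltr_wpDl // mulrC ltr_pM2l //.
by rewrite ltrDl.
Qed.

Lemma epsdelta_within (R : realType) (d m : nat) (A : set 'cV[R]_d)
  (g : 'cV[R]_d -> 'cV[R]_m) :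
  (forall w, A w -> forall e : R, 0 < e -> exists2 del : R, 0 < del &
     forall w', A w' -> `|w' - w| < del -> `|g w' - g w| < e) ->
  {within A, continuous g}.
Proof.
move=> H; apply/subspace_continuousP => w Aw.
apply/cvgrPdist_lt => e e0.
have [del del0 Hd] := H w Aw e e0.
rewrite /within /=; apply/nbhs_ballP; exists del => // t /=.
rewrite -ball_normE /= => wt At.
by rewrite distrC; apply: Hd => //; rewrite distrC.
Qed.

Lemma within_epsdelta (R : realType) (S : set R) (tau : R -> R) :
  {within S, continuous tau} ->
  forall y, S y -> forall e : R, 0 < e -> exists2 del : R, 0 < del &
     forall y', S y' -> `|y' - y| < del -> `|tau y' - tau y| < e.
Proof.
move=> /subspace_continuousP H y Sy e e0.
have := H y Sy; move=> /cvgrPdist_lt /(_ e e0).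
rewrite /within /= => /nbhs_ballP [del del0 Hd].
exists del => // y' Sy' yy'.
rewrite distrC; apply: Hd => //=.
by rewrite -ball_normE /= distrC.
Qed.

Lemma sigs_bnd (R : realType) (sigs : R -> R) (M : R) : (forall s, `|sigs s| <= M) ->
  forall s, inf (range sigs) <= sigs s <= sup (range sigs).
Proof.
move=> hM s; apply/andP; split.
  apply: (ge_inf (E := range sigs)); last by exists s.
  exists (- M) => _ [t _ <-]; have := hM t; rewrite ler_norml => /andP[] //.
apply: (ub_le_sup (E := range sigs)); last by exists s.
exists M => _ [t _ <-]; have := hM t; rewrite ler_norml => /andP[] //.
Qed.

Lemma sigs_surj (R : realType) (sigs : R -> R) (M : R) : continuous sigs ->
  (forall s, `|sigs s| <= M) ->
  forall y, inf (range sigs) < y < sup (range sigs) -> exists s, sigs s = y.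
Proof.
move=> cs hM y /andP[y1 y2].
have ne : range sigs !=set0 by exists (sigs 0), 0.
have [_ [s1 _ <-] h1] := inf_lt ne y1.
have [_ [s2 _ <-] h2] := sup_gt ne y2.
have key : forall a b, a <= b -> Num.min (sigs a) (sigs b) <= y <= Num.max (sigs a) (sigs b) ->
    exists s, sigs s = y.
  move=> a b ab hy; have [c _ <-] := IVT ab (continuous_subspaceT (A := `[a, b]) cs) hy.
  by exists c.
have hy1 : Num.min (sigs s1) (sigs s2) <= y <= Num.max (sigs s1) (sigs s2).
  by rewrite ge_min le_max (ltW h1) (ltW h2) ?orbT.
have hy2 : Num.min (sigs s2) (sigs s1) <= y <= Num.max (sigs s2) (sigs s1).
  by rewrite ge_min le_max (ltW h1) (ltW h2) ?orbT.
have [le12|le21] := leP s1 s2; first exact: key le12 hy1.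
exact: key (ltW le21) hy2.
Qed.

Lemma sigs_gap (R : realType) (sigs tau : R -> R) (M : R) :
  (forall s, `|sigs s| <= M) -> (forall s, tau (sigs s) = s) ->
  inf (range sigs) < sup (range sigs).
Proof.
move=> hM ht; rewrite ltNge; apply/negP => hle.
have := sigs_bnd hM 0; have := sigs_bnd hM 1.
move=> /andP[a1 a2] /andP[b1 b2].
have e0 : sigs 0 = sigs 1.
  apply/eqP; rewrite eq_le; apply/andP; split.
  - exact: le_trans b2 (le_trans hle a1).
  - exact: le_trans a2 (le_trans hle b1).
have := congr1 tau e0; rewrite !ht => /eqP; rewrite eq_sym oner_eq0 //.
Qed.

Definition hinv (R : realType) (sigs : R -> R) (C : R) (al : R) : R :=
  inf (range sigs) + (sup (range sigs) - inf (range sigs)) * ((al + C) / (2 * C)).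

Lemma hmap_hinv (R : realType) (sigs : R -> R) (C al : R) :
  inf (range sigs) < sup (range sigs) -> 0 < C -> hmap sigs C (hinv sigs C al) = al.
Proof.
move=> hs C0; rewrite /hmap /hinv.
set sm := inf _; set sp := sup _.
have D0 : sp - sm != 0 by rewrite subr_eq0 gt_eqF.
have C0' : C != 0 by rewrite gt_eqF.
rewrite addrAC subrr add0r.
field; apply/andP; split => //.
Qed.

Lemma hinv_in (R : realType) (sigs : R -> R) (C al : R) :
  inf (range sigs) < sup (range sigs) -> `|al| < C ->
  inf (range sigs) < hinv sigs C al < sup (range sigs).
Proof.
move=> hs; rewrite ltr_norml => /andP[a1 a2].
have C0 : 0 < C by lra.
rewrite /hinv; set sm := inf _; set sp := sup _.
have D0 : 0 < sp - sm by rewrite subr_gt0.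
have t0 : 0 < (al + C) / (2 * C) by apply: divr_gt0; lra.
have t1 : (al + C) / (2 * C) < 1 by rewrite ltr_pdivrMr; lra.
apply/andP; split.
  by rewrite ltrDl; apply: mulr_gt0.
rewrite -ltrBrDl; rewrite -[ltRHS]mulr1 ltr_pM2l //.
Qed.

Lemma hmap_lip (R : realType) (sigs : R -> R) (C x y : R) :
  inf (range sigs) < sup (range sigs) -> 0 < C ->
  `|hmap sigs C x - hmap sigs C y| = (2 * C / (sup (range sigs) - inf (range sigs))) * `|x - y|.
Proof.
move=> hs C0; rewrite /hmap; set sm := inf _; set sp := sup _.
have D0 : 0 < sp - sm by rewrite subr_gt0.
have -> : - C + 2 * C * (x - sm) / (sp - sm) - (- C + 2 * C * (y - sm) / (sp - sm))
   = (2 * C / (sp - sm)) * (x - y).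
  by field; rewrite gt_eqF.
rewrite normrM ger0_norm //; apply: divr_ge0; lra.
Qed.

Lemma unif_seg (R : realType) (s : R -> R) : continuous s ->
  forall M e : R, 0 < e -> exists2 del : R, 0 < del &
    forall t x, `|t| <= M -> `|x - t| < del -> `|s x - s t| < e.
Proof.
move=> cs M e e0.
have cK : compact (`[-M, M]%classic : set R) := @segment_compact _ _ _.
have := (proj1 (compact_near_coveringP _) cK) R (0 : R)^'+
  (fun del t => forall x, `|x - t| < del -> `|s x - s t| < e) _.
case.
- move=> t0 _.
  have e2 : 0 < e / 2 by lra.
  have := cs t0; move=> /cvgrPdist_lt /(_ _ e2) /nbhs_ballP [eta eta0 Heta].
  have eta1 : 0 < eta := eta0.
  exists (ball t0 (eta / 2), [set del | 0 < del < eta / 2]).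
    split => /=; first by apply: nbhsx_ballx; lra.
    have h2 : (0:R) < eta / 2 by lra.
    apply: filterS (filterI (nbhs_right_gt (0:R)) (nbhs_right_lt h2)).
    by move=> del [a b]; apply/andP.
  move=> [t del] /= [tb /andP[d0 d1]] x xt.
  move: tb; rewrite -ball_normE /= => tb.
  have hx : `|t0 - x| < eta.
    have := ler_distD t t0 x.
    rewrite (distrC x t) in xt; lra.
  have := Heta x; rewrite -ball_normE /= => /(_ hx) h1.
  have := Heta t; rewrite -ball_normE /= => /(_ (lt_trans tb _)) h3.
  have h3' := h3 ltac:(lra).
  have := ler_distD (s t0) (s x) (s t).
  rewrite (distrC (s t0) (s x)) in h1; lra.
- move=> r r0 Hr; have r1 : 0 < r := r0; exists (r / 2); first lra.
  move=> t x tM xt; apply: (Hr (r / 2)) => //=.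
  + rewrite sub0r normrN ger0_norm; lra.
  + lra.
  + by rewrite in_itv /= -ler_norml.
Qed.

Lemma fin_delta (R : realType) (T : finType) (P : T -> R -> Prop) :
  (forall i, exists2 d : R, 0 < d & forall d', 0 < d' -> d' <= d -> P i d') ->
  exists2 d : R, 0 < d & forall i, P i d.
Proof.
move=> H.
have H' : forall i, exists d : R, 0 < d /\ forall d', 0 < d' -> d' <= d -> P i d'.
  by move=> i; have [d d0 Hd] := H i; exists d.
have [df Hdf] := choice H'.
have pos : 0 < \big[Num.min/1]_(i : T) df i.
  by elim/big_ind: _ => // [x y x0 y0|i _]; [rewrite lt_min x0 y0 | exact: (Hdf i).1].
exists (\big[Num.min/1]_(i : T) df i) => // i.
apply: (Hdf i).2 => //.
by rewrite (bigD1 i) //= ge_min lexx.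
Qed.

Lemma core (R : realType) (d m : nat) (Omega : set 'cV[R]_d)
  (NS : nat -> set ('cV[R]_d -> 'cV[R]_m))
  (Phi : ('cV[R]_d -> 'cV[R]_m) -> ('cV[R]_d -> 'cV[R]_m))
  (alpha g0 : 'cV[R]_d -> 'cV[R]_m) :
  (fun n => ereal_inf [set supnorm Omega (fun x => gh x - g0 x) | gh in NS n]) @ \oo --> (0 : R)%:E ->
  (forall e : R, 0 < e -> exists2 del : R, 0 < del & forall gh,
     (forall w, Omega w -> `|gh w - g0 w| < del) ->
     forall w, Omega w -> `|Phi gh w - alpha w| <= e) ->
  (fun n => ereal_inf [set supnorm Omega (fun w => gt w - alpha w)
                       | gt in [set Phi gh | gh in NS n]]) @ \oo --> (0 : R)%:E.
Proof.
move=> UA H.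
have step : forall del : R, 0 < del -> \forall n \near \oo, exists2 gh, NS n gh &
    forall w, Omega w -> `|gh w - g0 w| < del.
  move=> del del0; move/fine_cvgP: UA => [fin cv].
  move/cvgrPdist_lt: cv => /(_ del del0) cv.
  apply: filterS2 fin cv => n fn cn.
  have : (ereal_inf [set supnorm Omega (fun x => (gh x - g0 x)%R) | gh in NS n] < del%:E)%E.
    rewrite -(fineK fn) lte_fin.
    by move: cn; rewrite /= sub0r normrN => /(le_lt_trans (ler_norm _)).
  move=> /ereal_inf_lt [_ [gh NSgh <-] hlt].
  exists gh => // w Ow; rewrite -lte_fin; apply: le_lt_trans hlt.
  by apply: ereal_sup_ubound; right; exists w.
have bnd : forall e : R, 0 < e -> \forall n \near \oo,
    (0 <= ereal_inf [set supnorm Omega (fun w => (gt w - alpha w)%R)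
                       | gt in [set Phi gh | gh in NS n]] <= e%:E)%E.
  move=> e e0; have [del del0 Hd] := H e e0.
  apply: filterS (step del del0) => n [gh NSgh Hgh].
  apply/andP; split.
    apply: le_ereal_inf_tmp => _ [gt _ <-].
    by apply: ereal_sup_ubound; left.
  apply: (@le_trans _ _ (supnorm Omega (fun w => Phi gh w - alpha w))).
    by apply: ereal_inf_lbound; exists (Phi gh) => //; exists gh.
  apply: ge_ereal_sup => _ [->|[w Ow <-]]; first by rewrite lee_fin ltW.
  by rewrite lee_fin; exact: Hd.
apply/fine_cvgP; split.
  apply: filterS (bnd 1 ltr01) => n /andP[h0 h1].
  by rewrite ge0_fin_numE // (le_lt_trans h1) // ltry.
apply/cvgrPdist_lt => e e0.
have e2 : 0 < e / 2 by lra.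
apply: filterS (bnd _ e2) => n /andP[h0 h1].
rewrite sub0r normrN /=.
set X := ereal_inf _ in h0 h1 *.
have Xf : X \is a fin_num by rewrite ge0_fin_numE // (le_lt_trans h1) // ltry.
rewrite -(fineK Xf) in h0 h1; rewrite lee_fin in h0; rewrite lee_fin in h1.
rewrite ger0_norm //; lra.
Qed.

Lemma hinv_lip (R : realType) (sigs : R -> R) (C x y : R) :
  inf (range sigs) < sup (range sigs) -> 0 < C ->
  `|hinv sigs C x - hinv sigs C y| = ((sup (range sigs) - inf (range sigs)) / (2 * C)) * `|x - y|.
Proof.
move=> hs C0; rewrite /hinv; set sm := inf _; set sp := sup _.
have D0 : 0 < sp - sm by rewrite subr_gt0.
have -> : sm + (sp - sm) * ((x + C) / (2 * C)) - (sm + (sp - sm) * ((y + C) / (2 * C)))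
   = ((sp - sm) / (2 * C)) * (x - y).
  by field; rewrite gt_eqF.
rewrite normrM ger0_norm //; apply: divr_ge0; lra.
Qed.

Lemma mxsubE (R : realType) m n (A B : 'M[R]_(m,n)) i j : (A - B) i j = A i j - B i j.
Proof. by rewrite !mxE. Qed.

Unset Implicit Arguments.

Theorem theorem2p2 (R : realType) (d N : nat) (a b : nat -> R) (nu : R)
  (f : R -> 'cV[R]_d -> R) (Omega : set 'cV[R]_d)
  (sigma : R -> R) (hs : nat -> seq nat) (sigs : R -> R) (C : R) :
  0 <= nu ->
  C_L1 Omega f ->
  (Amat a b nu N)^T = Amat a b nu N ->
  Amat a b nu N \in unitmx ->
  (* nested architectures *)
  (forall n, nn_set sigma d (hs n) N.-1 `<=` nn_set sigma d (hs n.+1) N.-1) ->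
  (* universal approximation *)
  (forall (K : set 'cV[R]_d) (g : 'cV[R]_d -> 'cV[R]_(N.-1)),
      compact K -> {within K, continuous g} ->
      (fun n => ereal_inf [set supnorm K (fun x => gh x - g x)
                           | gh in nn_set sigma d (hs n) N.-1]) @ \oo --> (0 : R)%:E) ->
  (* bounded activation with continuous inverse *)
  continuous sigs ->
  (exists M : R, forall s, `|sigs s| <= M) ->
  (exists tau : R -> R, (forall s, tau (sigs s) = s) /\
                        {within range sigs, continuous tau}) ->
  compact Omega ->
  (ereal_sup [set (`|alpha_star a b nu N f w|)%:E | w in Omega] < C%:E)%E ->
  (fun n => ereal_inf [set supnorm Omega (fun w => gt w - alpha_star a b nu N f w)
                       | gt in nn_bounded sigma sigs C d (hs n) N.-1]) @ \oo --> (0 : R)%:E.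
Proof.
move=> nu0 hf Asym Aunit hnest UA csigs [Ms hMs] [tau [htau ctau]] cO hsup.
have hbnd : forall w, Omega w -> `|alpha_star a b nu N f w| < C.
  move=> w Ow; rewrite -lte_fin; apply: le_lt_trans hsup.
  by apply: ereal_sup_ubound; exists w.
have coefb : forall w i j, Omega w -> `|alpha_star a b nu N f w i j| < C.
  by move=> w i j Ow; apply: le_lt_trans (hbnd w Ow); exact: mxnorm_coef.
have [C0|C0] := ltP 0 C; last first.
  apply: (@core R d N.-1 Omega (fun n => nn_set sigma d (hs n) N.-1)
     (fun g x => map_mx (hmap sigs C \o sigs) (g x)) (alpha_star a b nu N f) (fun _ => 0)).
    apply: UA => //; apply: continuous_subspaceT; exact: cst_continuous.
  move=> e e0; exists 1 => // gh _ w Ow; exfalso.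
  have := hbnd w Ow; have := normr_ge0 (alpha_star a b nu N f w); lra.
have gap := sigs_gap hMs htau.
have hrange : forall y, `|y| < C -> range sigs (hinv sigs C y).
  move=> y hy; have [s hs'] := sigs_surj csigs hMs (hinv_in gap hy).
  by exists s.
have sinv : forall y, `|y| < C -> sigs (tau (hinv sigs C y)) = hinv sigs C y.
  move=> y hy; have [s hs'] := sigs_surj csigs hMs (hinv_in gap hy).
  by rewrite -hs' htau.
pose g0 := fun w => map_mx (tau \o hinv sigs C) (alpha_star a b nu N f w).
have g0E : forall w i j, g0 w i j = tau (hinv sigs C (alpha_star a b nu N f w i j)).
  by move=> w i j; rewrite /g0 mxE.
set sm := inf (range sigs) in gap hrange sinv *; set sp := sup (range sigs) in gap hrange sinv *.
have D0 : 0 < sp - sm by rewrite subr_gt0.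
pose L := (sp - sm) / (2 * C).
have L0 : 0 <= L by apply: divr_ge0; lra.
have g0c : {within Omega, continuous g0}.
  apply: epsdelta_within => w Ow e e0.
  have := @fin_delta R ('I_N.-1 * 'I_1)%type
    (fun ij dd => forall y', range sigs y' ->
        `|y' - hinv sigs C (alpha_star a b nu N f w ij.1 ij.2)| < dd ->
        `|tau y' - tau (hinv sigs C (alpha_star a b nu N f w ij.1 ij.2))| < e).
  case.
    move=> [i j] /=.
    have [dl dl0 Hd] := within_epsdelta ctau (hrange _ (coefb w i j Ow)) e0.
    exists dl => // d' d0 dd y' ry' yd; apply: Hd => //; exact: lt_le_trans yd dd.
  move=> dl dl0 Hdl.
  have dl'0 : 0 < dl / (L + 1) by apply: divr_gt0 => //; lra.
  have [dl2 dl20 Hal] := alpha_cont a b nu N hf Ow dl'0.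
  exists dl2 => // w' Ow' ww'.
  apply/mxnorm_lt; split => // i j; rewrite mxsubE !g0E.
  apply: (Hdl (i, j)); first exact: hrange (coefb w' i j Ow').
  rewrite /= hinv_lip //.
  have h1 := mxnorm_coef (alpha_star a b nu N f w' - alpha_star a b nu N f w) i j.
  rewrite mxsubE in h1.
  have h2 := Hal w' Ow' ww'.
  apply: (@le_lt_trans _ _ (L * (dl / (L + 1)))).
    apply: ler_wpM2l => //; apply: ltW; exact: le_lt_trans h1 h2.
  rewrite mulrA ltr_pdivrMr; last lra.
  rewrite mulrC ltr_pM2l //; lra.
have UAg := UA Omega g0 cO g0c.
apply: (@core R d N.-1 Omega (fun n => nn_set sigma d (hs n) N.-1)
     (fun g x => map_mx (hmap sigs C \o sigs) (g x)) (alpha_star a b nu N f) g0 UAg).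
move=> e e0.
have [M [_ HM]] := compact_bounded (continuous_compact g0c cO).
have HM' : forall w, Omega w -> `|g0 w| <= M + 1.
  by move=> w Ow; apply: (HM (M + 1)); [lra | exists w].
pose L' := 2 * C / (sp - sm).
have L'0 : 0 < L' by apply: divr_gt0; lra.
have [dl dl0 Hu] := unif_seg csigs (M + 1) (divr_gt0 e0 L'0).
exists dl => // gh Hgh w Ow.
apply/mxnorm_le; split; first exact: ltW.
move=> i j; rewrite mxsubE mxE /=.
have -> : alpha_star a b nu N f w i j = hmap sigs C (sigs (g0 w i j)).
  by rewrite g0E sinv ?coefb // hmap_hinv.
rewrite hmap_lip // -/L'.
have ht : `|g0 w i j| <= M + 1 by apply: le_trans (HM' w Ow); exact: mxnorm_coef.
have hx : `|gh w i j - g0 w i j| < dl.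
  have := mxnorm_coef (gh w - g0 w) i j; rewrite mxsubE => h.
  exact: le_lt_trans h (Hgh w Ow).
have := Hu _ _ ht hx.
rewrite ltr_pdivlMr // => h; apply: ltW; by rewrite mulrC.
Qed.
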